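(* Let $H$ and $I$ be $r$-element subsets of $[n]$ with $H\le I$. (i) If $P,Q$ are $x$-element subsets of $[r]$ with $P\le Q$, then $H_P\le I_Q$ (as $x$-element subsets of $[n]$). (ii) If $P,Q$ are $y$-element subsets of $[n-r]$ with $P\le Q$, then $H^+_P\le I^+_Q$ (as $(r+y)$-element subsets of $[n]$).
   Context: $[n]=\{1,\dots,n\}$; subsets are written in increasing order. For $k$-element subsets $H=\{h_1<\dots<h_k\}$, $I=\{i_1<\dots<i_k\}$ of $[n]$, $H\le I$ means $h_a\le i_a$ for all $1\le a\le k$. For $I=\{i_1<\dots<i_r\}$ and $P=\{p_1<\dots<p_x\}\subseteq[r]$, $I_P=\{i_{p_1}<\dots<i_{p_x}\}$. For $P\subseteq[n-r]$ of cardinality $y$, $I^+_P=I\cup(I^c)_P$, where $I^c=[n]\setminus I$ written increasingly as $\{i^c_1<\dots<i^c_{n-r}\}$ and $(I^c)_P=\{i^c_{p}:p\in P\}$. *)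

(* Defs.v *)
From mathcomp Require Import all_boot all_order.
Set Implicit Arguments. Unset Strict Implicit. Unset Printing Implicit Defensive.

(* Convention: [n] = {1,...,n} is modelled by 'I_n = {0,...,n-1} via the
   order isomorphism k |-> k+1; all notions below are order-theoretic, so
   the shift is harmless. *)

Definition sorted_elts (n : nat) (A : {set 'I_n}) : seq nat :=
  sort leq [seq val i | i in A].

(* the a-th smallest element of A (0-indexed: a = 0 is the minimum) *)
Definition elt (n : nat) (A : {set 'I_n}) (a : nat) : nat :=
  nth 0 (sorted_elts A) a.

Definition gale_le (n : nat) (H I : {set 'I_n}) : Prop :=
  #|H| = #|I| /\ forall a, a < #|H| -> elt H a <= elt I a.

Definition rank_in (n : nat) (A : {set 'I_n}) (x : 'I_n) : nat :=
  index (val x) (sorted_elts A).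

(* I_P = { i_p : p in P }, positions of P (subset of 'I_m, 0-indexed) *)
Definition sub_at (n m : nat) (I : {set 'I_n}) (P : {set 'I_m}) : {set 'I_n} :=
  [set x in I | [exists p in P, rank_in I x == val p]].

Definition plus_at (n m : nat) (I : {set 'I_n}) (P : {set 'I_m}) : {set 'I_n} :=
  I :|: sub_at (~: I) P.

(* Main.v *)
Require Import Defs.
From mathcomp Require Import all_boot all_order.
Set Implicit Arguments. Unset Strict Implicit. Unset Printing Implicit Defensive.

Lemma count_set (T : finType) (A : {set T}) (p : pred T) :
  count p (enum A) = #|[set x in A | p x]|.
Proof.
rewrite -size_filter.
have /card_uniqP <- : uniq (filter p (enum A)) by rewrite filter_uniq ?enum_uniq.
by apply: eq_card => x; rewrite mem_filter mem_enum inE andbC.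
Qed.

Lemma se_count n (A : {set 'I_n}) (f : pred nat) :
  count f (sorted_elts A) = #|[set x in A | f (val x)]|.
Proof.
by rewrite /sorted_elts (permP (permEl (perm_sort _ _))) count_map -count_set.
Qed.

Lemma se_sorted n (A : {set 'I_n}) : sorted ltn (sorted_elts A).
Proof.
rewrite ltn_sorted_uniq_leq sort_uniq sort_sorted ?andbT; last exact: leq_total.
by rewrite map_inj_uniq ?enum_uniq //; apply: val_inj.
Qed.

Lemma se_size n (A : {set 'I_n}) : size (sorted_elts A) = #|A|.
Proof. by rewrite /sorted_elts size_sort size_map cardE. Qed.

Lemma se_mem n (A : {set 'I_n}) (v : nat) :
  (v \in sorted_elts A) = [exists x in A, val x == v].
Proof.
rewrite /sorted_elts mem_sort; apply/mapP/existsP => [[x]|[x /andP[xA /eqP <-]]].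
  by rewrite mem_enum => xA ->; exists x; rewrite xA eqxx.
by exists x; rewrite ?mem_enum.
Qed.

Lemma se_lt n (A : {set 'I_n}) v : v \in sorted_elts A -> v < n.
Proof. by rewrite se_mem => /existsP[x /andP[_ /eqP <-]]; apply: ltn_ord. Qed.

Lemma count_nth (s : seq nat) t a : sorted ltn s -> a < size s ->
  (a < count (fun v => v < t) s) = (nth 0 s a < t).
Proof.
elim: s a => [|x s IH] a //= Hs Ha.
have Hall : all (fun y => x < y) s.
  by apply: order_path_min Hs; exact: ltn_trans.
have Hs' : sorted ltn s := path_sorted Hs.
case: a Ha => [|a] Ha /=.
  case: (ltnP x t) => xt //=.
  rewrite add0n -has_count; apply/negP => /hasP[y ys yt].
  have := allP Hall y ys; move=> xy.
  by rewrite ltnNge (leq_trans xt (ltnW xy)) in yt.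
rewrite -IH //; case: (ltnP x t) => xt //=.
have -> : count (fun v => v < t) s = 0.
  apply/eqP; rewrite -leqn0 leqNgt -has_count; apply/negP => /hasP[y ys yt].
  have := allP Hall y ys => xy.
  by rewrite ltnNge (leq_trans xt (ltnW xy)) in yt.
by [].
Qed.

Definition cnt n (A : {set 'I_n}) t := count (fun v => v < t) (sorted_elts A).

Lemma gale_iff n (A B : {set 'I_n}) : #|A| = #|B| ->
  gale_le A B <-> forall t, cnt B t <= cnt A t.
Proof.
move=> hAB; split.
  case=> _ hle t; rewrite /cnt.
  case E: (count _ (sorted_elts B)) => [|c] //.
  have hc : c < size (sorted_elts B) by rewrite -E; apply: count_size.
  have := @count_nth _ t c (se_sorted B) hc; rewrite E ltnSn => /esym hB.
  rewrite count_nth ?se_sorted ?se_size ?hAB -?se_size //.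
  apply: leq_ltn_trans hB; apply: hle; by rewrite hAB -se_size.
move=> h; split => // a ha.
have haB : a < size (sorted_elts B) by rewrite se_size -hAB.
have haA : a < size (sorted_elts A) by rewrite se_size.
have := h (elt B a).+1; rewrite /cnt.
have := @count_nth _ (elt B a).+1 a (se_sorted B) haB; rewrite /elt ltnSn => hB.
move=> hle; have : a < count (fun v => v < (nth 0 (sorted_elts B) a).+1) (sorted_elts A).
  exact: leq_trans hB hle.
by rewrite count_nth ?se_sorted.
Qed.

Lemma se_sub n m (A : {set 'I_n}) (P : {set 'I_m}) : #|A| = m ->
  sorted_elts (sub_at A P) = map (nth 0 (sorted_elts A)) (sorted_elts P).
Proof.
move=> hm; set s := sorted_elts A.
have us : uniq s by have := se_sorted A; rewrite ltn_sorted_uniq_leq => /andP[].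
have Psz : forall j, j \in sorted_elts P -> j < size s.
  by move=> j /se_lt; rewrite /s se_size hm.
apply: (irr_sorted_eq ltn_trans ltnn (se_sorted _)).
  apply: (@homo_sorted_in _ _ [pred j | j < size s] _ ltn ltn) (se_sorted P).
    by move=> i j hi hj; apply: sorted_ltn_nth => //; [exact: ltn_trans|exact: se_sorted].
  by apply/allP => j /Psz.
move=> v; rewrite se_mem; apply/existsP/mapP.
  case=> x /andP[]; rewrite inE => /andP[xA /existsP[p /andP[pP /eqP hr]]] /eqP <-.
  exists (val p); first by rewrite se_mem; apply/existsP; exists p; rewrite pP eqxx.
  rewrite -hr /rank_in nth_index //; rewrite se_mem; apply/existsP; exists x.
  by rewrite xA eqxx.
case=> j hj ->.
have hjs := Psz j hj.
have : nth 0 s j \in s by apply: mem_nth.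
rewrite {1}/s se_mem => /existsP[x /andP[xA /eqP hx]].
exists x; rewrite hx eqxx andbT inE xA /=.
move: hj; rewrite se_mem => /existsP[p /andP[pP /eqP hp]].
apply/existsP; exists p; rewrite pP /rank_in hx -/s index_uniq // hp eqxx.
by [].
Qed.

Lemma cnt_sub n m (A : {set 'I_n}) (P : {set 'I_m}) t : #|A| = m ->
  cnt (sub_at A P) t = cnt P (cnt A t).
Proof.
move=> hm; rewrite /cnt se_sub // count_map.
apply: eq_in_count => j hj /=.
by rewrite count_nth ?se_sorted // se_size hm; apply: se_lt hj.
Qed.

Lemma card_sub n m (A : {set 'I_n}) (P : {set 'I_m}) : #|A| = m ->
  #|sub_at A P| = #|P|.
Proof. by move=> hm; rewrite -se_size se_sub // size_map se_size. Qed.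
From mathcomp Require Import zify.

Lemma cnt_mono n (A : {set 'I_n}) t t' : t <= t' -> cnt A t <= cnt A t'.
Proof. by move=> h; apply: sub_count => v /= hv; apply: leq_trans h. Qed.

Lemma cnt_lip n (A : {set 'I_n}) u k : cnt A (u + k) <= cnt A u + k.
Proof.
elim: k => [|k IH]; first by rewrite !addn0.
apply: leq_trans (_ : cnt A (u + k) + 1 <= _); last lia.
rewrite addnS /cnt.
have us : uniq (sorted_elts A) by have := se_sorted A; rewrite ltn_sorted_uniq_leq => /andP[].
rewrite (eq_count (a2 := predU (fun v => v < u + k) (pred1 (u + k)))); last first.
  by move=> v /=; rewrite ltnS leq_eqVlt orbC.
have := count_predUI (fun v => v < u + k) (pred1 (u + k)) (sorted_elts A).
have := count_uniq_mem (u + k) us.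
case: (u + k \in sorted_elts A) => /= h1 h2; lia.
Qed.

Lemma cnt_set n (A : {set 'I_n}) t : cnt A t = #|[set x in A | val x < t]|.
Proof. by rewrite /cnt se_count. Qed.

Lemma cnt_C n (A : {set 'I_n}) t : cnt A t + cnt (~: A) t = #|[set x : 'I_n | val x < t]|.
Proof.
rewrite !cnt_set -(cardsID A [set x : 'I_n | val x < t]).
have -> : [set x in A | val x < t] = [set x : 'I_n | val x < t] :&: A.
  by apply/setP => x; rewrite !inE andbC.
have -> : [set x in ~: A | val x < t] = [set x : 'I_n | val x < t] :\: A.
  by apply/setP => x; rewrite !inE andbC.
by [].
Qed.

Lemma cnt_U n (A B : {set 'I_n}) t : A :&: B = set0 -> cnt (A :|: B) t = cnt A t + cnt B t.
Proof.
move=> hd; rewrite !cnt_set.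
have -> : [set x in A :|: B | val x < t] = [set x in A | val x < t] :|: [set x in B | val x < t].
  by apply/setP => x; rewrite !inE andb_orl.
rewrite cardsU.
have -> : [set x in A | val x < t] :&: [set x in B | val x < t] = set0.
  apply/setP => x; rewrite !inE; apply/negP => /andP[/andP[xA _] /andP[xB _]].
  by move/setP: hd => /(_ x); rewrite !inE xA xB.
by rewrite cards0 subn0.
Qed.

Lemma disj n m (A : {set 'I_n}) (P : {set 'I_m}) : A :&: sub_at (~: A) P = set0.
Proof. by apply/setP => x; rewrite !inE; case: (x \in A). Qed.

Theorem lemma1 (n r : nat) (H I : {set 'I_n}) :
  #|H| = r -> #|I| = r -> gale_le H I ->
  (forall (x : nat) (P Q : {set 'I_r}),
      #|P| = x -> #|Q| = x -> gale_le P Q ->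
      #|sub_at H P| = x /\ #|sub_at I Q| = x /\ gale_le (sub_at H P) (sub_at I Q))
  /\
  (forall (y : nat) (P Q : {set 'I_(n - r)}),
      #|P| = y -> #|Q| = y -> gale_le P Q ->
      #|plus_at H P| = r + y /\ #|plus_at I Q| = r + y /\
      gale_le (plus_at H P) (plus_at I Q)).
Proof.
move=> hH hI hHI.
have gHI := (gale_iff (etrans hH (esym hI))).1 hHI.
split.
  move=> x P Q hP hQ hPQ.
  have gPQ := (gale_iff (etrans hP (esym hQ))).1 hPQ.
  have c1 : #|sub_at H P| = x by rewrite card_sub.
  have c2 : #|sub_at I Q| = x by rewrite card_sub.
  do 2 split => //; apply/gale_iff; first by rewrite c1 c2.
  move=> t; rewrite !cnt_sub //.
  by apply: leq_trans (gPQ _) _; apply: cnt_mono.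
have cC : forall A : {set 'I_n}, #|A| = r -> #|~: A| = n - r.
  by move=> A hA; rewrite cardsCs setCK card_ord hA.
move=> y P Q hP hQ hPQ.
have gPQ := (gale_iff (etrans hP (esym hQ))).1 hPQ.
have c1 : #|plus_at H P| = r + y.
  by rewrite /plus_at cardsU disj cards0 subn0 card_sub ?cC // hH hP.
have c2 : #|plus_at I Q| = r + y.
  by rewrite /plus_at cardsU disj cards0 subn0 card_sub ?cC // hI hQ.
do 2 split => //; apply/gale_iff; first by rewrite c1 c2.
move=> t; rewrite /plus_at !cnt_U ?disj // !cnt_sub ?cC //.
have e := etrans (cnt_C H t) (esym (cnt_C I t)).
have hc := gHI t.
have -> : cnt (~: I) t = cnt (~: H) t + (cnt H t - cnt I t) by lia.
have := cnt_lip P (cnt (~: H) t) (cnt H t - cnt I t).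
have := gPQ (cnt (~: H) t + (cnt H t - cnt I t)).
lia.
Qed.
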